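(* There exists a function $\delta$, defined on pairs of partitions, with the following two properties. (i) For every $T\ge 1$, every $K\ge 1$ and every two partitions $P=\{P_1,\dots,P_K\}$ and $Q=\{Q_1,\dots,Q_K\}$ of $\{1,\dots,T\}$ into $K$ nonempty clusters each, with clusters indexed so that $Q_k$ is regarded as the counterpart of $P_k$, we have $$\|M_P-M_Q\|_F^2 \;=\; 2\sum_{k=1}^K \frac{\epsilon_{k\to}+\epsilon_{\to k}}{|P_k|}\,\bigl(1+\delta(P,Q)\bigr).$$ (ii) The function $\delta$ satisfies $$\sup\bigl\{\,|\delta(P,Q)| \;:\; T\ge 1,\ K\ge 1,\ P,Q \text{ as in (i)},\ K\cdot m(P,Q)\le \epsilon\,\bigr\}\;\longrightarrow\;0 \quad\text{as } \epsilon\to 0 .$$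
   Context: For a partition $P$ of $\{1,\dots,T\}$ into nonempty clusters $P_1,\dots,P_K$, its rescaled equivalence matrix $M_P\in\mathbb{R}^{T\times T}$ is defined by $(M_P)_{ij}=1/|P_k|$ if $i$ and $j$ both lie in the same cluster $P_k$, and $(M_P)_{ij}=0$ otherwise; equivalently $M_P=Y(Y^\top Y)^{-1}Y^\top$ where $Y\in\{0,1\}^{T\times K}$ is the assignment matrix with $Y_{ik}=1$ iff $i\in P_k$. $\|\cdot\|_F$ is the Frobenius norm. For two partitions $P,Q$ as in the claim: for $k\ne l$, $\epsilon_{k\to l}=|P_k\cap Q_l|$; the outer flow is $\epsilon_{k\to}=\sum_{l\ne k}\epsilon_{k\to l}$; the inner flow is $\epsilon_{\to k}=\sum_{j\ne k}\epsilon_{j\to k}$; and $m(P,Q)=\max_{k\ne l}\dfrac{\epsilon_{k\to l}}{\min(|P_k|,|P_l|)}$ (with $m(P,Q)=0$ if $K=1$). *)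

(* Defs.v *)
From HB Require Import structures.
From mathcomp Require Import all_boot all_order all_algebra.
Set Implicit Arguments. Unset Strict Implicit. Unset Printing Implicit Defensive.
Import Order.TTheory GRing.Theory Num.Theory.
Local Open Scope ring_scope.

(* A partition of {1..T} into K indexed clusters is encoded by its labeling
   p : 'I_T -> 'I_K ; cluster P_k = { i | p i = k }. *)
Definition cluster (T K : nat) (p : 'I_T -> 'I_K) (k : 'I_K) : {set 'I_T} :=
  [set i | p i == k].

Definition nonempty_clusters (T K : nat) (p : 'I_T -> 'I_K) : Prop :=
  forall k : 'I_K, exists i : 'I_T, p i = k.

Definition resc_eqmx (R : realFieldType) (T K : nat) (p : 'I_T -> 'I_K)
  : 'M[R]_T :=
  \matrix_(i < T, j < T)
    (if p i == p j then (#|cluster p (p i)|%:R)^-1 else 0).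

Definition frob2 (R : realFieldType) (m n : nat) (A : 'M[R]_(m, n)) : R :=
  \sum_(i < m) \sum_(j < n) (A i j) ^+ 2.

Definition flow (T K : nat) (p q : 'I_T -> 'I_K) (k l : 'I_K) : nat :=
  #|cluster p k :&: cluster q l|.

Definition outflow (T K : nat) (p q : 'I_T -> 'I_K) (k : 'I_K) : nat :=
  (\sum_(l < K | l != k) flow p q k l)%N.

Definition inflow (T K : nat) (p q : 'I_T -> 'I_K) (k : 'I_K) : nat :=
  (\sum_(j < K | j != k) flow p q j k)%N.

(* m(P,Q) = max_{k<>l} eps_{k->l} / min(|P_k|,|P_l|), and 0 if K = 1
   (all terms are >= 0, so a max seeded with 0 is the same). *)
Definition mPQ (R : realFieldType) (T K : nat) (p q : 'I_T -> 'I_K) : R :=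
  \big[Num.max/0]_(k < K) \big[Num.max/0]_(l < K | l != k)
     ((flow p q k l)%:R / (minn #|cluster p k| #|cluster p l|)%:R).

(* Main.v *)
Require Import Defs.
From HB Require Import structures.
From mathcomp Require Import all_boot all_order all_algebra.
From mathcomp Require Import ring lra.
Import Order.TTheory GRing.Theory Num.Theory.
Local Open Scope ring_scope.

Lemma card_setP (T : finType) (P : pred T) :
  #|[set i | P i]| = (\sum_i (P i : nat))%N.
Proof.
rewrite -sum1_card big_mkcond /=; apply: eq_bigr => i _; rewrite inE.
by case: (P i).
Qed.

Lemma pick_sum (R : pzRingType) n (x : 'I_n) (f : 'I_n -> R) :
  \sum_(l < n) ((x == l)%:R * f l) = f x.
Proof.
rewrite (bigD1 x) //= eqxx mul1r big1 ?addr0 // => l /negbTE.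
by rewrite eq_sym => ->; rewrite mul0r.
Qed.

Lemma pick_sumr (R : pzRingType) n (x : 'I_n) (f : 'I_n -> R) :
  \sum_(l < n) (f l * (l == x)%:R) = f x.
Proof.
rewrite (bigD1 x) //= eqxx mulr1 big1 ?addr0 // => l /negbTE ->.
by rewrite mulr0.
Qed.

Lemma natr_andb (R : pzRingType) (b1 b2 : bool) :
  ((b1 && b2)%:R : R) = b1%:R * b2%:R.
Proof. by case: b1; case: b2; rewrite /= ?mul1r ?mul0r. Qed.

Lemma card_cl (R : pzRingType) T K (p : 'I_T -> 'I_K) k :
  (#|cluster p k|%:R : R) = \sum_i ((p i == k)%:R).
Proof. by rewrite /cluster card_setP natr_sum. Qed.

Lemma flow_sum (R : pzRingType) T K (p q : 'I_T -> 'I_K) k l :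
  ((flow p q k l)%:R : R) = \sum_i (((p i == k) && (q i == l))%:R).
Proof.
rewrite /flow /cluster -setIdE.
have -> : [set x in [set i | p i == k] | q x == l] = [set i | (p i == k) && (q i == l)].
  by apply/setP => i; rewrite !inE.
by rewrite card_setP natr_sum.
Qed.

Lemma reindex (R : pzRingType) T K (p q : 'I_T -> 'I_K) (g : 'I_K -> 'I_K -> R) :
  \sum_i g (p i) (q i) = \sum_k \sum_l (flow p q k l)%:R * g k l.
Proof.
apply/esym.
under eq_bigr do under eq_bigr do rewrite flow_sum mulr_suml.
under eq_bigr do rewrite exchange_big /=.
rewrite exchange_big /=; apply: eq_bigr => i _.
under eq_bigr do under eq_bigr do rewrite natr_andb -mulrA.
under eq_bigr do rewrite -mulr_sumr pick_sum.
by rewrite (@pick_sum R _ (p i) (fun k => g k (q i))).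
Qed.

Lemma a_sum (R : pzRingType) T K (p q : 'I_T -> 'I_K) k :
  (#|cluster p k|%:R : R) = \sum_l (flow p q k l)%:R.
Proof.
rewrite card_cl (@reindex R T K p q (fun k' _ => (k' == k)%:R)) /=.
under eq_bigr do rewrite -mulr_suml.
by rewrite (@pick_sumr R _ k (fun k' => \sum_l (flow p q k' l)%:R)).
Qed.

Lemma b_sum (R : pzRingType) T K (p q : 'I_T -> 'I_K) l :
  (#|cluster q l|%:R : R) = \sum_k (flow p q k l)%:R.
Proof.
rewrite card_cl (@reindex R T K p q (fun _ l' => (l' == l)%:R)) /=.
apply: eq_bigr => k _.
by rewrite (@pick_sumr R _ l (fun l' => (flow p q k l')%:R)).
Qed.

Definition hh (R : realFieldType) T K (p q : 'I_T -> 'I_K) (k l : 'I_K) : R :=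
  (#|cluster p k|%:R) * (#|cluster p k|%:R)^-1 ^+ 2
  + (#|cluster q l|%:R) * (#|cluster q l|%:R)^-1 ^+ 2
  - 2 * ((flow p q k l)%:R * ((#|cluster p k|%:R)^-1 * (#|cluster q l|%:R)^-1)).

Arguments hh {R T K} p q k l.

Lemma ifz (R : realFieldType) (E : eqType) (a b : E) (x : R) :
  (if a == b then x else 0) = (b == a)%:R * x.
Proof. by rewrite eq_sym; case: (b == a); rewrite ?mul1r ?mul0r. Qed.

Lemma sqb (R : realFieldType) (b1 b2 : bool) (x y : R) :
  (b1%:R * x - b2%:R * y) ^+ 2
  = b1%:R * x ^+ 2 + b2%:R * y ^+ 2 - 2 * ((b1 && b2)%:R * (x * y)).
Proof. by case: b1; case: b2 => /=; ring. Qed.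

Lemma frob_eq (R : realFieldType) T K (p q : 'I_T -> 'I_K) :
  frob2 (resc_eqmx R p - resc_eqmx R q)
  = \sum_k \sum_l (flow p q k l)%:R * (hh p q k l : R).
Proof.
rewrite /frob2 -(@reindex R T K p q (hh p q)); apply: eq_bigr => i _.
under eq_bigr do rewrite !mxE !ifz sqb.
rewrite !big_split /= sumrN -!mulr_suml -mulr_sumr -mulr_suml.
by rewrite -!card_cl -flow_sum.
Qed.
Lemma ident (R : realFieldType) K (N : 'I_K -> 'I_K -> R) (a b : 'I_K -> R) :
  (forall k, a k = \sum_l N k l) -> (forall l, b l = \sum_k N k l) ->
  (forall k, 0 < a k) -> (forall l, 0 < b l) ->
  2 * (\sum_k ((a k - N k k + (b k - N k k)) / a k))
  - \sum_k \sum_l N k l * (a k * (a k)^-1 ^+ 2 + b l * (b l)^-1 ^+ 2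
                          - 2 * (N k l * ((a k)^-1 * (b l)^-1)))
  = 2 * \sum_k ((b k - N k k) ^+ 2 / (a k * b k)
                + \sum_(l | l != k) N k l ^+ 2 / (a k * b l)).
Proof.
move=> Ha Hb a0 b0.
have an k : a k != 0 by rewrite gt_eqF.
have bn k : b k != 0 by rewrite gt_eqF.
have E1 : \sum_k \sum_l N k l * (a k * (a k)^-1 ^+ 2 + b l * (b l)^-1 ^+ 2
                          - 2 * (N k l * ((a k)^-1 * (b l)^-1)))
   = \sum_k \sum_l N k l / a k + \sum_k \sum_l N k l / b l
     - 2 * \sum_k \sum_l N k l ^+ 2 / (a k * b l).
  rewrite mulr_sumr -big_split /= -sumrB; apply: eq_bigr => k _.
  rewrite mulr_sumr -big_split /= -sumrB; apply: eq_bigr => l _.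
  by field; rewrite ?an ?bn.
have A1 : \sum_k \sum_l N k l / a k = K%:R.
  transitivity (\sum_(k < K) (1 : R)); last by rewrite sumr_const card_ord.
  by apply: eq_bigr => k _; rewrite -mulr_suml -Ha divff.
have B1 : \sum_k \sum_l N k l / b l = K%:R.
  transitivity (\sum_(k < K) (1 : R)); last by rewrite sumr_const card_ord.
  rewrite exchange_big /=.
  by apply: eq_bigr => k _; rewrite -mulr_suml -Hb divff.
rewrite E1 A1 B1.
transitivity (2 * \sum_k ((a k - N k k + (b k - N k k)) / a k - 1
                + \sum_l N k l ^+ 2 / (a k * b l))).
  rewrite !big_split /= sumrN sumr_const card_ord.
  rewrite [(1 : R) *+ K]/(K%:R). ring.
congr (_ * _); apply: eq_bigr => k _.
rewrite (bigD1 k) //= addrA; congr (_ + _).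
by field; rewrite ?an ?bn.
Qed.

Lemma sum_ne_le (R : realFieldType) K (k : 'I_K) (f : 'I_K -> R) (c : R) :
  (forall l, l != k -> f l <= c) -> 0 <= c ->
  \sum_(l | l != k) f l <= K%:R * c.
Proof.
move=> Hf c0; apply: (@le_trans _ _ (\sum_(l < K) c)).
  rewrite big_mkcond /=; apply: ler_sum => l _.
  by case: ifP => [/Hf|]. 
by rewrite sumr_const card_ord mulr_natl.
Qed.

Lemma Gnonneg (R : realFieldType) K (N : 'I_K -> 'I_K -> R) (a b : 'I_K -> R) k :
  (forall k, 0 < a k) -> (forall l, 0 < b l) -> 
  0 <= (b k - N k k) ^+ 2 / (a k * b k)
                + \sum_(l | l != k) N k l ^+ 2 / (a k * b l).
Proof.
move=> a0 b0; apply: addr_ge0.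
  by apply: divr_ge0; [apply: sqr_ge0| apply: mulr_ge0; apply: ltW].
apply: sumr_ge0 => l _.
by apply: divr_ge0; [apply: sqr_ge0| apply: mulr_ge0; apply: ltW].
Qed.

Lemma Gbound (R : realFieldType) K (N : 'I_K -> 'I_K -> R) (a b : 'I_K -> R) (m0 : R) k :
  (0 < K)%N ->
  (forall k, a k = \sum_l N k l) -> (forall l, b l = \sum_k N k l) ->
  (forall k, 0 < a k) -> (forall l, 0 < b l) ->
  (forall k l, 0 <= N k l) ->
  (forall k l, l != k -> N k l <= m0 * a k /\ N k l <= m0 * a l) ->
  0 <= m0 -> K%:R * m0 <= 1/2 ->
  (b k - N k k) ^+ 2 / (a k * b k)
                + \sum_(l | l != k) N k l ^+ 2 / (a k * b l)
  <= 2 * (K%:R * m0) * ((a k - N k k + (b k - N k k)) / a k).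
Proof.
move=> K0 Ha Hb a0 b0 N0 Hm m00 Hc.
set c := K%:R * m0.
have c0 : 0 <= c by apply: mulr_ge0.
have mc : m0 <= c.
  rewrite /c -subr_ge0 -[X in _ - X]mul1r -mulrBl; apply: mulr_ge0 => //.
  by rewrite subr_ge0 ler1n.
have Ha' j : a j = N j j + \sum_(l | l != j) N j l by rewrite Ha (bigD1 j).
have Hb' j : b j = N j j + \sum_(l | l != j) N l j by rewrite Hb (bigD1 j).
have ob j : \sum_(l | l != j) N j l <= c * a j.
  rewrite /c -mulrA; apply: sum_ne_le; last by apply: mulr_ge0 => //; apply: ltW.
  by move=> l /Hm [].
have ib j : \sum_(l | l != j) N l j <= c * a j.
  rewrite /c -mulrA; apply: sum_ne_le; last by apply: mulr_ge0 => //; apply: ltW.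
  by move=> l; rewrite eq_sym => /Hm [].
have hc : c <= 1/2 by rewrite /c.
clearbody c.
have oge j : 0 <= \sum_(l | l != j) N j l by apply: sumr_ge0.
have ige j : 0 <= \sum_(l | l != j) N l j by apply: sumr_ge0.
have bh j : a j <= 2 * b j.
  have := ob j; have := Ha' j; have := Hb' j; have := ige j; have := a0 j.
  have : 0 <= (1/2 - c) * a j by apply: mulr_ge0; [rewrite subr_ge0; exact: hc | apply: ltW; exact: a0].
  lra.
set o := \sum_(l | l != k) N k l.
set i := \sum_(l | l != k) N l k.
have -> : a k - N k k = o by rewrite [a k]Ha' [N k k + _]addrC addrK.
have -> : b k - N k k = i by rewrite [b k]Hb' [N k k + _]addrC addrK.
have ak0 := a0 k; have bk0 := b0 k.
have T1 : i ^+ 2 / (a k * b k) <= 2 * c * (i / a k).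
  have -> : i ^+ 2 / (a k * b k) = (i / a k) * (i / b k) by field; rewrite ?gt_eqF.
  rewrite [2 * c * _]mulrC; apply: ler_wpM2l; first by apply: divr_ge0; [exact: ige | exact: ltW].
  rewrite ler_pdivrMr //.
  have := ib k; rewrite -/i; have : 0 <= c * (2 * b k - a k) by apply: mulr_ge0 => //; rewrite subr_ge0; exact: bh.
  rewrite -/i; lra.
have T2 : \sum_(l | l != k) N k l ^+ 2 / (a k * b l) <= 2 * m0 * (o / a k).
  rewrite /o mulr_suml mulr_sumr; apply: ler_sum => l lk.
  have bl0 := b0 l.
  have -> : N k l ^+ 2 / (a k * b l) = (N k l / a k) * (N k l / b l) by field; rewrite ?gt_eqF.
  rewrite [2 * m0 * _]mulrC; apply: ler_wpM2l; first by apply: divr_ge0; [exact: N0 | exact: ltW].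
  rewrite ler_pdivrMr //.
  have [_ H2] := Hm k l lk.
  have : 0 <= m0 * (2 * b l - a l) by apply: mulr_ge0 => //; rewrite subr_ge0; exact: bh.
  lra.
have oa : 0 <= o / a k by apply: divr_ge0; [exact: oge | exact: ltW].
have ia : 0 <= i / a k by apply: divr_ge0; [exact: ige | exact: ltW].
have -> : (o + i) / a k = o / a k + i / a k by rewrite mulrDl.
nra.
Qed.

Lemma le_bigmax0 (R : realFieldType) (I : eqType) (r : seq I) (P : pred I)
  (F : I -> R) x :
  x \in r -> P x -> F x <= \big[Num.max/0]_(i <- r | P i) F i.
Proof.
elim: r => // y r IH; rewrite inE big_cons => /orP [/eqP ->|xr] Px.
  by rewrite Px le_max lexx.
by case: (P y); [rewrite le_max IH ?orbT | exact: IH].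
Qed.

Lemma bigmax0_ge0 (R : realFieldType) (I : Type) (r : seq I) (P : pred I)
  (F : I -> R) : (forall i, P i -> 0 <= F i) ->
  0 <= \big[Num.max/0]_(i <- r | P i) F i.
Proof.
move=> HF; apply: (big_ind (fun x => 0 <= x)) => //.
by move=> x y x0 y0; rewrite le_max x0.
Qed.

Definition Sdef (R : realFieldType) T K (p q : 'I_T -> 'I_K) : R :=
  \sum_(k < K) ((outflow p q k + inflow p q k)%:R / #|cluster p k|%:R).

Arguments Sdef R {T K} p q.

Lemma mPQ_ge0 (R : realFieldType) T K (p q : 'I_T -> 'I_K) : 0 <= mPQ R p q.
Proof.
apply: bigmax0_ge0 => k _; apply: bigmax0_ge0 => l _.
by apply: divr_ge0; apply: ler0n.
Qed.

Lemma flow_le (R : realFieldType) T K (p q : 'I_T -> 'I_K) k l :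
  nonempty_clusters p -> l != k ->
  ((flow p q k l)%:R : R) <= mPQ R p q * #|cluster p k|%:R /\
  ((flow p q k l)%:R : R) <= mPQ R p q * #|cluster p l|%:R.
Proof.
move=> ne lk.
have cpos j : (0 < #|cluster p j|)%N.
  have [i pi] := ne j; apply/card_gt0P; exists i; by rewrite inE pi.
set mn := minn #|cluster p k| #|cluster p l|.
have mn0 : (0 : R) < mn%:R by rewrite ltr0n leq_min !cpos.
have H : (flow p q k l)%:R / mn%:R <= mPQ R p q.
  apply: (@le_trans _ _ (\big[Num.max/0]_(l' < K | l' != k)
           ((flow p q k l')%:R / (minn #|cluster p k| #|cluster p l'|)%:R))).
    exact: (@le_bigmax0 R _ _ (fun l' => l' != k) (fun l' =>
           (flow p q k l')%:R / (minn #|cluster p k| #|cluster p l'|)%:R) l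
           (mem_index_enum _) lk).
  exact: (@le_bigmax0 R _ _ xpredT (fun k' => \big[Num.max/0]_(l' < K | l' != k')
           ((flow p q k' l')%:R / (minn #|cluster p k'| #|cluster p l'|)%:R)) k
           (mem_index_enum _) isT).
move: H; rewrite ler_pdivrMr // => H.
have m0 := @mPQ_ge0 R _ _ p q.
split; apply: (le_trans H); apply: ler_wpM2l => //; rewrite ler_nat /mn.
  exact: geq_minl.
exact: geq_minr.
Qed.

Lemma facts (R : realFieldType) T K (p q : 'I_T -> 'I_K) :
  (0 < K)%N -> nonempty_clusters p -> nonempty_clusters q ->
  let S := Sdef R p q in let F := frob2 (resc_eqmx R p - resc_eqmx R q) in
  0 <= F /\ 0 <= S /\ 0 <= 2 * S - F /\
  (K%:R * mPQ R p q <= 1/2 -> 2 * S - F <= 4 * (K%:R * mPQ R p q) * S).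
Proof.
move=> K0 nep neq S F.
pose N k l : R := (flow p q k l)%:R.
pose a k : R := #|cluster p k|%:R.
pose b l : R := #|cluster q l|%:R.
have Ha k : a k = \sum_l N k l by rewrite /a (@a_sum R _ _ p q).
have Hb l : b l = \sum_k N k l by rewrite /b (@b_sum R _ _ p q).
have a0 k : 0 < a k.
  have [i pi] := nep k; rewrite /a ltr0n; apply/card_gt0P; exists i; by rewrite inE pi.
have b0 k : 0 < b k.
  have [i pi] := neq k; rewrite /b ltr0n; apply/card_gt0P; exists i; by rewrite inE pi.
have N0 k l : 0 <= N k l by apply: ler0n.
have eS : S = \sum_k ((a k - N k k + (b k - N k k)) / a k).
  rewrite /S /Sdef; apply: eq_bigr => k _; rewrite natrD; congr ((_ + _) / _).
    rewrite /a /N; apply/esym; rewrite (@a_sum R _ _ p q k) (bigD1 k) //= addrAC subrr add0r.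
    by rewrite /outflow natr_sum.
  rewrite /b /N; apply/esym; rewrite (@b_sum R _ _ p q k) (bigD1 k) //= addrAC subrr add0r.
  by rewrite /inflow natr_sum.
have eF : F = \sum_k \sum_l N k l * (a k * (a k)^-1 ^+ 2 + b l * (b l)^-1 ^+ 2
                          - 2 * (N k l * ((a k)^-1 * (b l)^-1))).
  by rewrite /F frob_eq.
have eG := @ident R K N a b Ha Hb a0 b0.
rewrite -eS -eF in eG.
have S0 : 0 <= S.
  rewrite /S /Sdef; apply: sumr_ge0 => k _; apply: divr_ge0; apply: ler0n.
split.
  by rewrite /F /frob2; apply: sumr_ge0 => i _; apply: sumr_ge0 => j _; apply: sqr_ge0.
split => //; split.
  by rewrite eG; apply: mulr_ge0 => //; apply: sumr_ge0 => k _; apply: Gnonneg.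
move=> Hc; rewrite eG eS mulr_sumr [X in _ <= X]mulr_sumr.
apply: ler_sum => k _.
have m0 := @mPQ_ge0 R _ _ p q.
have := @Gbound R K N a b (mPQ R p q) k K0 Ha Hb a0 b0 N0 (fun k l lk => @flow_le R _ _ p q k l nep lk) m0 Hc.
move=> HH; lra.
Qed.

Theorem theoremA (R : realFieldType) :
  exists delta : forall T K : nat, ('I_T -> 'I_K) -> ('I_T -> 'I_K) -> R,
    (forall (T K : nat) (p q : 'I_T -> 'I_K),
        (0 < T)%N -> (0 < K)%N -> nonempty_clusters p -> nonempty_clusters q ->
        frob2 (resc_eqmx R p - resc_eqmx R q)
        = 2 * (\sum_(k < K) ((outflow p q k + inflow p q k)%:R
                              / #|cluster p k|%:R))
            * (1 + delta T K p q))
    /\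
    (forall e : R, 0 < e ->
       exists eps : R, 0 < eps /\
         forall (T K : nat) (p q : 'I_T -> 'I_K),
           (0 < T)%N -> (0 < K)%N -> nonempty_clusters p -> nonempty_clusters q ->
           K%:R * mPQ R p q <= eps -> `|delta T K p q| <= e).
Proof.
exists (fun T K p q => if Sdef R p q == 0 then 0
  else frob2 (resc_eqmx R p - resc_eqmx R q) / (2 * Sdef R p q) - 1).
split.
  move=> T K p q _ K0 nep neq.
  have [F0 [S0 [G0 _]]] := @facts R T K p q K0 nep neq.
  rewrite -[\sum_(k < K) _]/(Sdef R p q).
  move: F0 S0 G0; set F := frob2 _; set S := Sdef R p q => F0 S0 G0.
  case: eqP => [Se|Sne].
    rewrite Se in G0 *; rewrite mulr0 mul0r; lra.
  by field; apply/eqP.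
move=> e e0; exists (Num.min (1/2) (e/2)); split.
  by rewrite lt_min; apply/andP; split; lra.
move=> T K p q _ K0 nep neq Hm.
have [F0 [S0 [G0 HB]]] := @facts R T K p q K0 nep neq.
move: F0 S0 G0 HB; set F := frob2 _; set S := Sdef R p q => F0 S0 G0 HB.
have m0 := @mPQ_ge0 R _ _ p q.
move: Hm; rewrite le_min => /andP [h1 h2].
have HB' := HB h1.
case: eqP => [_|Sne]; first by rewrite normr0 ltW.
have Sp : 0 < S by rewrite lt_neqAle eq_sym; apply/andP; split => //; apply/eqP.
rewrite ler_norml.
set c := K%:R * mPQ R p q in h1 h2 HB'.
set x := F / (2 * S).
have Fx : F = x * (2 * S) by rewrite /x; field; rewrite gt_eqF.
rewrite Fx in G0 HB'.
clearbody x c.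
apply/andP; split; nra.
Qed.
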